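(* Consider the queueing system in the context under MaxWeight with a diagonal matrix $\Delta$ with positive diagonal entries, in overload ($\rho\notin\mathcal{P}$). Let $H=\limsup_{t\to\infty}\langle \frac{X(t)}{t},\Delta\frac{X(t)}{t}\rangle$ and let $\eta$ be the limit of $X(t_c)/t_c$ along an increasing unbounded sequence $\{t_c\}$ with $\langle\eta,\Delta\eta\rangle=H$. Then for every $\epsilon\in(0,1)$, $$-\Big[\langle\rho,\Delta\eta\rangle-\max_{S\in\mathcal{S}}\langle S,\Delta\eta\rangle\Big]\frac{\epsilon}{1-\epsilon}+\langle\eta,\Delta\eta\rangle\frac{1}{1-\epsilon}\ge\langle\eta,\Delta\eta\rangle.$$
   Context: Model: $Q$ queues, finite set $\mathcal{S}=\{S_1,\dots,S_N\}\subset\mathbb{R}^Q_{\ge0}$, discrete time. Arrivals $A(t)$ with $0\le A_q(t)\le\bar A_q<\infty$ and $\rho_q=\lim_{t\to\infty}\frac1t\sum_{s=0}^{t-1}A_q(s)\in(0,\infty)$. Departures $D_q(t)=\min\{S_q(t),X_q(t)\}$, $X(t+1)=X(t)+A(t)-D(t)$, $X(0)=0$, with $S(t)\in\arg\max_{S\in\mathcal{S}}\langle S,\Delta X(t)\rangle$. Stability region $\mathcal{P}=\{r\in\mathbb{R}^Q_{\ge0}: r\le\sum_n\alpha_nS_n\text{ for some }\alpha_n\ge0,\sum_n\alpha_n=1\}$. *)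

(* Defs.v *)
From HB Require Import structures.
From mathcomp Require Import all_boot all_order all_algebra.
From mathcomp Require Import all_classical all_reals all_analysis.
Set Implicit Arguments. Unset Strict Implicit. Unset Printing Implicit Defensive.
Import Order.TTheory GRing.Theory Num.Theory.
Local Open Scope ring_scope.

(* Vectors in R^Q are functions 'I_Q -> R.  The diagonal matrix Delta is
   represented by its diagonal d : 'I_Q -> R. *)

Definition ipD {R : realType} {Q : nat} (d x y : 'I_Q -> R) : R :=
  \sum_(q < Q) x q * (d q * y q).

Definition maxSD {R : realType} {Q N : nat} (Ss : 'I_N.+1 -> 'I_Q -> R)
  (d y : 'I_Q -> R) : R :=
  \big[Num.max/ipD d (Ss ord0) y]_(n < N.+1) ipD d (Ss n) y.

Definition in_stab_region {R : realType} {Q N : nat} (Ss : 'I_N.+1 -> 'I_Q -> R)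
  (r : 'I_Q -> R) : Prop :=
  (forall q, 0 <= r q) /\
  exists alpha : 'I_N.+1 -> R,
    (forall n, 0 <= alpha n) /\ \sum_(n < N.+1) alpha n = 1 /\
    forall q, r q <= \sum_(n < N.+1) alpha n * Ss n q.

(* Main.v *)
Require Import Defs.
From HB Require Import structures.
From mathcomp Require Import all_boot all_order all_algebra.
From mathcomp Require Import all_classical all_reals all_analysis.
From mathcomp Require Import ring lra.
Import Order.TTheory GRing.Theory Num.Theory.
Import numFieldNormedType.Exports.
Local Open Scope classical_set_scope.
Local Open Scope ring_scope.

Lemma key_ineq {R : realType} {Q k : nat} (d x y a : 'I_Q -> R) (D Sk : 'I_k -> 'I_Q -> R) (B : R) :
 (forall q, 0 <= x q) -> (forall q, 0 < d q) -> (forall i q, D i q <= Sk i q) ->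
 (forall i, ipD d (Sk i) x <= B) ->
 (forall q, y q = x q + a q - \sum_(i < k) D i q) ->
 ipD d x x + 2 * ipD d x a - 2 * (k%:R * B) <= ipD d y y.
Proof.
move=> x0 d0 DS SB ey.
have h1 : ipD d y y = ipD d x x + 2 * ipD d x (fun q => y q - x q)
           + \sum_(q < Q) d q * (y q - x q) ^+ 2.
  rewrite /ipD mulr_sumr -!big_split /=; apply: eq_bigr => q _; ring.
have h3 : 0 <= \sum_(q < Q) d q * (y q - x q) ^+ 2.
  by apply: sumr_ge0 => q _; rewrite mulr_ge0 ?sqr_ge0 // ltW.
have h2 : ipD d x a - k%:R * B <= ipD d x (fun q => y q - x q).
  have -> : ipD d x (fun q => y q - x q) =
     ipD d x a - \sum_(i < k) \sum_(q < Q) x q * (d q * D i q).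
    rewrite exchange_big /ipD -sumrB; apply: eq_bigr => q _.
    rewrite ey -!mulr_sumr; ring.
  rewrite lerD2l lerN2.
  have -> : k%:R * B = \sum_(i < k) B by rewrite sumr_const card_ord mulr_natl.
  apply: ler_sum => i _; apply: le_trans (SB i); rewrite /ipD.
  apply: ler_sum => q _.
  rewrite mulrA [Sk i q * _]mulrCA mulrA [x q * d q]mulrC.
  have hdx : 0 <= d q * x q by rewrite mulr_ge0 // ltW.
  have := DS i q; nra.

rewrite h1; lra.
Qed.

Lemma X_ge0 {R : realType} {Q N : nat} (Ss : 'I_N.+1 -> 'I_Q -> R) (A X : nat -> 'I_Q -> R)
  (sel : nat -> 'I_N.+1) :
  (forall t q, 0 <= A t q) -> (forall q, X 0%N q = 0) ->
  (forall t q, X t.+1 q = X t q + A t q - Num.min (Ss (sel t) q) (X t q)) ->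
  forall t q, 0 <= X t q.
Proof.
move=> A0 X0 rec; elim=> [|t IH] q; first by rewrite X0.
rewrite rec; have : Num.min (Ss (sel t) q) (X t q) <= X t q by rewrite ge_min lexx orbT.
have := A0 t q; lra.
Qed.

Lemma X_rec {R : realType} {Q N : nat} (Ss : 'I_N.+1 -> 'I_Q -> R) (A X : nat -> 'I_Q -> R)
  (sel : nat -> 'I_N.+1) :
  (forall t q, X t.+1 q = X t q + A t q - Num.min (Ss (sel t) q) (X t q)) ->
  forall T j q, X (T + j)%N q = X T q + (\sum_(s < T + j) A s q - \sum_(s < T) A s q)
     - \sum_(i < j) Num.min (Ss (sel (T + i)%N) q) (X (T + i)%N q).
Proof.
move=> rec T; elim=> [|j IH] q.
  by rewrite addn0 big_ord0; lra.
rewrite addnS rec {1}IH (big_ord_recr (T + j)) (big_ord_recr j) /=; lra.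
Qed.

Lemma esup_near {R : realType} (u : nat -> R) (H e : R) :
  limn_esup (fun t => (u t)%:E) = H%:E -> 0 < e -> \forall t \near \oo, u t <= H + e.
Proof.
move=> hl e0.
have : (limn_esup (fun t => (u t)%:E) < (H + e)%:E)%E by rewrite hl lte_fin ltrDl.
rewrite /limn_esup /limf_esup => /ereal_inf_lt [y [V hV <-]] hlt.
apply: filterS hV => t Vt.
rewrite -lee_fin; apply: le_trans (ltW hlt).
by apply: ereal_sup_ubound; exists t.
Qed.

Lemma near_subseqn (P : nat -> Prop) (s : nat -> nat) :
  (\forall t \near \oo, P t) -> (forall c, (c <= s c)%N) -> \forall c \near \oo, P (s c).
Proof.
move=> [N _ HN] hs; exists N => // c /= Nc; apply: HN => /=.
exact: leq_trans Nc (hs c).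
Qed.

Lemma ipD_scale_r {R : realType} {Q : nat} (d x y : 'I_Q -> R) (b : R) :
  ipD d x (fun q => y q / b) = ipD d x y / b.
Proof. rewrite /ipD mulr_suml; apply: eq_bigr => q _; ring. Qed.

Lemma ipD_scale {R : realType} {Q : nat} (d x y : 'I_Q -> R) (a b : R) :
  ipD d (fun q => x q / a) (fun q => y q / b) = ipD d x y / (a * b).
Proof.
rewrite /ipD mulr_suml; apply: eq_bigr => q _; rewrite invfM; ring.
Qed.

Lemma cvg_sum_seq {R : realType} (I : Type) (r : seq I) (f : I -> nat -> R) (l : I -> R) :
  (forall i, f i @ \oo --> l i) ->
  (fun c => \sum_(i <- r) f i c) @ \oo --> \sum_(i <- r) l i.
Proof.
move=> H; elim: r => [|i r IH].
  rewrite big_nil; under eq_cvg do rewrite big_nil; exact: cvg_cst.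
rewrite big_cons; under eq_cvg do rewrite big_cons.
exact: cvgD.
Qed.

Lemma cvg_subseqn {R : realType} (u : nat -> R) (s : nat -> nat) (l : R) :
  u @ \oo --> l -> (forall c, (c <= s c)%N) -> (fun c => u (s c)) @ \oo --> l.
Proof.
move=> ul hs; apply: cvg_comp ul.
move=> P [N _ HN]; exists N => // c /= Nc; apply: HN => /=.
exact: leq_trans Nc (hs c).
Qed.

Lemma ipD_cvg {R : realType} {Q : nat} (d : 'I_Q -> R) (x y : nat -> 'I_Q -> R) (lx ly : 'I_Q -> R) :
  (forall q, (fun c => x c q) @ \oo --> lx q) ->
  (forall q, (fun c => y c q) @ \oo --> ly q) ->
  (fun c => ipD d (x c) (y c)) @ \oo --> ipD d lx ly.
Proof.
move=> hx hy; rewrite /ipD; apply: (@cvg_sum_seq R _ _ (fun q c => x c q * (d q * y c q))) => q.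
apply: cvgM; first exact: hx.
apply: cvgM; [exact: cvg_cst | exact: hy].
Qed.
Lemma ratio_bounds {R : realType} (t K m c : R) : 0 < m -> 1 <= c -> c <= t -> 0 <= K -> K * m <= t -> t < (K+1) * m ->
  m^-1 - 2 * (c+1)^-1 <= K/t <= m^-1.
Proof.
move=> m0 c1 ct K0 h1 h2.
have t0 : 0 < t by lra.
have ta : t * t^-1 = 1 by rewrite mulfV // gt_eqF.
have mb : m * m^-1 = 1 by rewrite mulfV // gt_eqF.
have ce : (c+1) * (c+1)^-1 = 1 by rewrite mulfV // gt_eqF //; lra.
have a0 : 0 < t^-1 by rewrite invr_gt0.
have b0 : 0 < m^-1 by rewrite invr_gt0.
have e0 : 0 < (c+1)^-1 by rewrite invr_gt0; lra.
have hab : 0 <= t^-1 * m^-1 by rewrite mulr_ge0 // ltW.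
apply/andP; split.
  have hae : 0 <= t^-1 * (c+1)^-1 by rewrite mulr_ge0 // ltW.
  have l1 : m^-1 - K/t = (t - K * m) * (t^-1 * m^-1).
    have -> : (t - K * m) * (t^-1 * m^-1) = (t * t^-1) * m^-1 - K * (m * m^-1) * t^-1 by ring.
    by rewrite ta mb; ring.
  have l2 : (t - K * m) * (t^-1 * m^-1) <= m * (t^-1 * m^-1) by rewrite ler_wpM2r //; lra.
  have l3 : m * (t^-1 * m^-1) = t^-1 by rewrite mulrCA mb mulr1.
  have l4 : (c + 1) * (t^-1 * (c+1)^-1) <= (2 * t) * (t^-1 * (c+1)^-1) by rewrite ler_wpM2r //; lra.
  have l5 : (c + 1) * (t^-1 * (c+1)^-1) = t^-1 by rewrite mulrCA ce mulr1.
  have l6 : (2 * t) * (t^-1 * (c+1)^-1) = 2 * (c+1)^-1 by rewrite -mulrA [t * _]mulrA ta mul1r.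
  lra.
have : (K * m) * (t^-1 * m^-1) <= t * (t^-1 * m^-1) by rewrite ler_wpM2r.
have -> : K * m * (t^-1 * m^-1) = K / t * (m * m^-1) by ring.
have -> : t * (t^-1 * m^-1) = (t * t^-1) * m^-1 by ring.
by rewrite ta mb mulr1 mul1r.
Qed.

Lemma ratio_cvg {R : realType} (tc : nat -> nat) (m : nat) : (0 < m)%N -> (forall c, (c <= tc c)%N) ->
  (fun c => ((tc c %/ m)%:R / (tc c)%:R : R)) @ \oo --> (m%:R^-1 : R).
Proof.
move=> m0 hc.
apply: (@squeeze_cvgr _ _ _ _ (fun c => m%:R^-1 - 2 * harmonic c) (fun c => m%:R^-1)).
- near=> c.
  have c1 : (1 <= c)%N by near: c; exact: nbhs_infty_ge.
  have hb := @ratio_bounds R (tc c)%:R (tc c %/ m)%:R m%:R c%:R.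
  rewrite /harmonic /=; move: hb; rewrite [c%:R + 1]natr1; apply.
  + by rewrite ltr0n.
  + by rewrite ler1n.
  + by rewrite ler_nat.
  + by [].
  + by rewrite -natrM ler_nat leq_trunc_div.
  + by rewrite natr1 -natrM ltr_nat ltn_ceil.
- rewrite -[X in _ --> X]subr0; apply: cvgB; first exact: cvg_cst.
  rewrite -(mulr0 2); apply: cvgM; first exact: cvg_cst.
  exact: cvg_harmonic.
- exact: cvg_cst.
Unshelve. all: by end_near.
Qed.

Lemma claim {R : realType} {Q N : nat} (Ss : 'I_N.+1 -> 'I_Q -> R) (d : 'I_Q -> R)
  (A : nat -> 'I_Q -> R) (rho : 'I_Q -> R) (X : nat -> 'I_Q -> R) (sel : nat -> 'I_N.+1)
  (tc : nat -> nat) (eta : 'I_Q -> R) (m : nat) (dl : R) :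
  (forall q, 0 < d q) ->
  (forall t q, 0 <= A t q) ->
  (forall q, (fun t : nat => (\sum_(s < t) A s q) / t%:R) @ \oo --> rho q) ->
  (forall q, X 0%N q = 0) ->
  (forall t q, X t.+1 q = X t q + A t q - Num.min (Ss (sel t) q) (X t q)) ->
  (forall c, (tc c < tc c.+1)%N) ->
  (forall q, (fun c : nat => X (tc c) q / (tc c)%:R) @ \oo --> eta q) ->
  limn_esup (fun t : nat =>
      (ipD d (fun q => X t q / t%:R) (fun q => X t q / t%:R))%:E)
    = (ipD d eta eta)%:E ->
  (0 < m)%N -> 0 < dl ->
  ipD d eta eta + 2 * ipD d eta (fun q => rho q * (1 + m%:R^-1) - rho q)
    - 2 * (m%:R^-1 * (maxSD Ss d eta + dl))
   <= (ipD d eta eta + dl) * (1 + m%:R^-1) ^+ 2.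
Proof.
move=> d0 A0 hrho X0 rec htc heta hsup m0 dl0.
set H := ipD d eta eta. set M := maxSD Ss d eta. set al := m%:R^-1.
have tcge : forall c, (c <= tc c)%N.
  by elim=> // c IH; exact: leq_ltn_trans IH (htc c).
have T'ge : forall c, (c <= tc c + tc c %/ m)%N.
  by move=> c; exact: leq_trans (tcge c) (leq_addr _ _).
have rcv := @ratio_cvg R tc m m0 tcge.
have cumT' : forall q, (fun c => (\sum_(s < tc c + tc c %/ m) A s q) / (tc c + tc c %/ m)%N%:R)
    @ \oo --> rho q.
  move=> q; by have := @cvg_subseqn R _ _ _ (hrho q) T'ge.
have cumT : forall q, (fun c => (\sum_(s < tc c) A s q) / (tc c)%:R) @ \oo --> rho q.
  move=> q; by have := @cvg_subseqn R _ _ _ (hrho q) tcge.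
have fcv : (fun c => ipD d (fun q => X (tc c) q / (tc c)%:R) (fun q => X (tc c) q / (tc c)%:R)
   + 2 * ipD d (fun q => X (tc c) q / (tc c)%:R)
       (fun q => (\sum_(s < tc c + tc c %/ m) A s q) / (tc c + tc c %/ m)%N%:R
                  * (1 + (tc c %/ m)%:R / (tc c)%:R)
                 - (\sum_(s < tc c) A s q) / (tc c)%:R)
   - 2 * ((tc c %/ m)%:R / (tc c)%:R * (M + dl))) @ \oo -->
   H + 2 * ipD d eta (fun q => rho q * (1 + al) - rho q) - 2 * (al * (M + dl)).
  apply: cvgB; [apply: cvgD|].
  - exact: ipD_cvg.
  - apply: cvgM; first exact: cvg_cst.
    apply: ipD_cvg => // q.
    apply: cvgB; last exact: cumT.
    apply: cvgM; first exact: cumT'.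
    apply: cvgD; first exact: cvg_cst.
    exact: rcv.
  - apply: cvgM; first exact: cvg_cst.
    apply: cvgM; first exact: rcv.
    exact: cvg_cst.
have gcv : (fun c => (H + dl) * (1 + (tc c %/ m)%:R / (tc c)%:R) ^+ 2) @ \oo -->
   (H + dl) * (1 + al) ^+ 2.
  apply: cvgM; first exact: cvg_cst.
  rewrite expr2; under eq_cvg do rewrite expr2.
  by apply: cvgM; apply: cvgD => //; exact: cvg_cst.
apply: (ler_cvg_to fcv gcv).
have hsupn : \forall c \near \oo,
   ipD d (fun q => X (tc c + tc c %/ m)%N q / (tc c + tc c %/ m)%N%:R)
         (fun q => X (tc c + tc c %/ m)%N q / (tc c + tc c %/ m)%N%:R) <= H + dl.
  exact: (@near_subseqn (fun t => ipD d (fun q => X t q / t%:R) (fun q => X t q / t%:R) <= H + dl)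
     _ (@esup_near R (fun t => ipD d (fun q => X t q / t%:R) (fun q => X t q / t%:R)) H dl hsup dl0) T'ge).
have hmax : \forall c \near \oo, forall n, ipD d (Ss n) (fun q => X (tc c) q / (tc c)%:R) < M + dl.
  apply: filter_forall => n.
  have hlt : ipD d (Ss n) eta < M + dl.
    apply: le_lt_trans (_ : M < M + dl); last by rewrite ltrDl.
    exact: le_bigmax.
  exact: (cvgr_lt _ (@ipD_cvg R Q d (fun _ => Ss n) (fun c q => X (tc c) q / (tc c)%:R) (Ss n) eta
     (fun q => cvg_cst _) heta) _ hlt).
apply: (@filter_app3 _ _ _ _ _ _ _ _ hsupn hmax (nbhs_infty_ge 1)).
near=> c => h1 h2 c1.
set T := tc c in h1 h2 *. set K := (T %/ m)%N in h1 h2 *.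
have t0 : 0 < T%:R :> R by rewrite ltr0n; exact: leq_trans c1 (tcge c).
have t'E : (T + K)%N%:R = T%:R + K%:R :> R by rewrite natrD.
have K0 : 0 <= K%:R :> R by [].
have t'0 : 0 < (T + K)%N%:R :> R by rewrite t'E; lra.
have Xge0 := @X_ge0 R Q N Ss A X sel A0 X0 rec.
have key := @key_ineq R Q K d (X T) (X (T + K)%N)
  (fun q => \sum_(s < T + K) A s q - \sum_(s < T) A s q)
  (fun i q => Num.min (Ss (sel (T + i)%N) q) (X (T + i)%N q))
  (fun i => Ss (sel (T + i)%N)) (T%:R * (M + dl)) (fun q => Xge0 T q) d0
  (fun i q => ltac:(by rewrite ge_min lexx))
  (fun i => ltac:(have := h2 (sel (T + i)%N); rewrite ipD_scale_r ltr_pdivrMr // mulrC; exact: ltW))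
  (fun q => @X_rec R Q N Ss A X sel rec T K q).
have e1 := ipD_scale d (X T) (X T) T%:R T%:R.
have e2 : ipD d (fun q => X T q / T%:R)
       (fun q => (\sum_(s < T + K) A s q) / (T + K)%N%:R * (1 + K%:R / T%:R)
                 - (\sum_(s < T) A s q) / T%:R)
   = ipD d (X T) (fun q => \sum_(s < T + K) A s q - \sum_(s < T) A s q) / (T%:R * T%:R).
  rewrite -ipD_scale; congr ipD; apply: funext => q.
  rewrite t'E; field.
  by apply/andP; split; rewrite gt_eqF //; lra.
have e3 := h1; rewrite ipD_scale ler_pdivrMr in e3; last by rewrite mulr_gt0.
rewrite e1 e2.
have -> : ipD d (X T) (X T) / (T%:R * T%:R) +
   2 * (ipD d (X T) (fun q => \sum_(s < T + K) A s q - \sum_(s < T) A s q) / (T%:R * T%:R)) -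
   2 * (K%:R / T%:R * (M + dl)) =
   (ipD d (X T) (X T) + 2 * ipD d (X T) (fun q => \sum_(s < T + K) A s q - \sum_(s < T) A s q)
     - 2 * (K%:R * (T%:R * (M + dl)))) * (T%:R * T%:R)^-1.
  by field; rewrite gt_eqF.
have -> : (H + dl) * (1 + K%:R / T%:R) ^+ 2 = (H + dl) * ((T + K)%N%:R * (T + K)%N%:R) * (T%:R * T%:R)^-1.
  by rewrite t'E; field; rewrite gt_eqF.
apply: ler_wpM2r; first by rewrite invr_ge0 ltW // mulr_gt0.
exact: le_trans key e3.
Unshelve. all: by end_near.
Qed.

Theorem lemma6 (R : realType) (Q N : nat)
  (Ss : 'I_N.+1 -> 'I_Q -> R)          (* schedule set S = {S_1,...,S_N} *)
  (d : 'I_Q -> R)                      (* diagonal of Delta *)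
  (A : nat -> 'I_Q -> R) (Abar : 'I_Q -> R) (rho : 'I_Q -> R)
  (X : nat -> 'I_Q -> R) (sel : nat -> 'I_N.+1)
  (tc : nat -> nat) (eta : 'I_Q -> R) :
  (forall n q, 0 <= Ss n q) ->
  (forall q, 0 < d q) ->
  (forall t q, 0 <= A t q <= Abar q) ->
  (forall q, (fun t : nat => (\sum_(s < t) A s q) / t%:R) @ \oo --> rho q) ->
  (forall q, 0 < rho q) ->
  (* MaxWeight dynamics *)
  (forall q, X 0%N q = 0) ->
  (forall t n, ipD d (Ss n) (X t) <= ipD d (Ss (sel t)) (X t)) ->
  (forall t q, X t.+1 q = X t q + A t q - Num.min (Ss (sel t) q) (X t q)) ->
  (* overload *)
  ~ in_stab_region Ss rho ->
  (* eta : limit along an increasing unbounded sequence achieving the limsup H *)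
  (forall c, (tc c < tc c.+1)%N) ->
  (forall q, (fun c : nat => X (tc c) q / (tc c)%:R) @ \oo --> eta q) ->
  limn_esup (fun t : nat =>
      (ipD d (fun q => X t q / t%:R) (fun q => X t q / t%:R))%:E)
    = (ipD d eta eta)%:E ->
  forall eps : R, 0 < eps < 1 ->
    - (ipD d rho eta - maxSD Ss d eta) * (eps / (1 - eps))
      + ipD d eta eta * (1 / (1 - eps))
    >= ipD d eta eta.
Proof.
move=> hS hd hA hrho hrhopos hX0 hmw hrec hover htc heta hsup eps /andP[eps0 eps1].
have A0 : forall t q, 0 <= A t q by move=> t q; have /andP[] := hA t q.
set H := ipD d eta eta. set P := ipD d rho eta. set M := maxSD Ss d eta.
have H0 : 0 <= H.
  by apply: sumr_ge0 => q _; rewrite mulrCA -expr2 mulr_ge0 ?sqr_ge0 // ltW.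
have main : P - M <= H.
  rewrite leNgt; apply/negP => hlt.
  set e := P - M - H.
  have e0 : 0 < e by rewrite /e; lra.
  set B := (H + 7) / (2 * e).
  set m := (Num.Def.archi_bound B).+1.
  have hm : B < m%:R.
    apply: lt_le_trans (unstable.ltr_bound B) _; rewrite ler_nat; exact: leqnSn.
  set al := (m%:R : R)^-1.
  have m0 : 0 < (m%:R : R) by rewrite ltr0n.
  have al0 : 0 < al by rewrite invr_gt0.
  have alm : al * m%:R = 1 by rewrite mulVf // gt_eqF.
  have al1 : al <= 1.
    by rewrite invr_le1 // ?unitfE ?gt_eqF // ler1n.
  have hc := @claim R Q N Ss d A rho X sel tc eta m (al ^+ 2) hd A0 hrho hX0 hrec htc heta hsup
     (ltn0Sn _) (exprn_gt0 _ al0).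
  have sym : ipD d eta (fun q => rho q * (1 + al) - rho q) = al * P.
    by rewrite /P /ipD mulr_sumr; apply: eq_bigr => q _; ring.
  rewrite sym -/H -/M -/al in hc.
  have h1 : al * (2 * e) <= al * (al * H + al + 4 * al ^+ 2 + al ^+ 3).
    rewrite /e; move: hc; lra.
  have h2 : 2 * e <= al * H + al + 4 * al ^+ 2 + al ^+ 3 by rewrite -(ler_pM2l al0).
  have h3 : al ^+ 2 <= al by rewrite expr2 ger_pMl.
  have h4 : al ^+ 3 <= al.
    rewrite exprS; apply: le_trans (_ : al * al ^+ 2 <= al * 1) _.
      by apply: ler_wpM2l; [exact: ltW | lra].
    by rewrite mulr1.
  have h5 : H + 7 < m%:R * (2 * e) by rewrite -ltr_pdivrMr ?mulr_gt0.
  have h6 : al * (H + 7) < al * (m%:R * (2 * e)) by rewrite ltr_pM2l.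
  rewrite [al * (m%:R * _)]mulrA alm mul1r in h6.
  have h7 : al * H + al * 7 < 2 * e by rewrite -mulrDr.
  suff : 2 * e < 2 * e by rewrite ltxx.
  lra.
have e1 : 0 < 1 - eps by lra.
have -> : - (P - M) * (eps / (1 - eps)) + H * (1 / (1 - eps))
    = H + eps * (H - (P - M)) * (1 - eps)^-1.
  by field; rewrite gt_eqF.
rewrite lerDl; apply: mulr_ge0; [apply: mulr_ge0 | rewrite invr_ge0]; lra.
Qed.
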